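(* Let $X$ be a real Banach space with $\dim X\ge 2$. Then $S_P(X)\ge \tfrac12\left(C'_{NJ}(X)-1\right)$.
   Context: For a real Banach space $X$ with unit sphere $S_X$, the P-angle constant is $S_P(X)=\sup\left\{\frac{\|x+y\|^2+\|x-y\|^2-4}{2\|x+y\|\,\|x-y\|}: x,y\in S_X,\ x\neq \pm y\right\}$. The modified von Neumann–Jordan constant is $C'_{NJ}(X)=\sup\left\{\frac{\|x+y\|^2+\|x-y\|^2}{4}: x,y\in S_X\right\}$. *)

(* Defs.v *)
From HB Require Import structures.
From mathcomp Require Import all_boot all_order all_algebra.
From mathcomp Require Import all_classical all_reals all_analysis.
Set Implicit Arguments. Unset Strict Implicit. Unset Printing Implicit Defensive.
Import Order.TTheory GRing.Theory Num.Theory.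
Import numFieldNormedType.Exports.
Local Open Scope classical_set_scope.
Local Open Scope ring_scope.

Definition unit_sphere {R : realType} (X : normedModType R) : set X :=
  [set x | `|x| = 1].

Definition SP_const {R : realType} (X : normedModType R) : \bar R :=
  ereal_sup [set ((`|p.1 + p.2| ^+ 2 + `|p.1 - p.2| ^+ 2 - 4) /
                   (2 * `|p.1 + p.2| * `|p.1 - p.2|))%:E
            | p in [set p : X * X | `|p.1| = 1 /\ `|p.2| = 1
                                    /\ p.1 <> p.2 /\ p.1 <> - p.2]].

Definition CNJ'_const {R : realType} (X : normedModType R) : \bar R :=
  ereal_sup [set ((`|p.1 + p.2| ^+ 2 + `|p.1 - p.2| ^+ 2) / 4)%:E
            | p in [set p : X * X | `|p.1| = 1 /\ `|p.2| = 1]].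

Definition dim_ge2 {R : realType} (X : normedModType R) : Prop :=
  exists x y : X, forall a b : R, a *: x + b *: y = 0 -> a = 0 /\ b = 0.

(* Main.v *)
Require Import Defs.
From HB Require Import structures.
From mathcomp Require Import all_boot all_order all_algebra.
From mathcomp Require Import all_classical all_reals all_analysis.
From mathcomp Require Import lra.
Import Order.TTheory GRing.Theory Num.Theory.
Import numFieldNormedType.Exports.
Local Open Scope classical_set_scope.
Local Open Scope ring_scope.

Section S.
Context (R : realType) (X : normedModType R).

Lemma neq_of_norm (u v : X) : 0 < `|u - v| -> u <> v.
Proof. by move=> h e; move: h; rewrite e subrr normr0 ltxx. Qed.

Lemma neqN_of_norm (u v : X) : 0 < `|u + v| -> u <> - v.
Proof. by move=> h e; move: h; rewrite e addNr normr0 ltxx. Qed.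

Lemma SP_ge_val (x y : X) (b : R) : `|x| = 1 -> `|y| = 1 ->
  `|x + y| = b -> `|x - y| = b -> 2 <= b ^+ 2 -> (0 <= SP_const X)%E.
Proof.
move=> hx hy hA hB hb.
have b0 : 0 < b.
  have := normr_ge0 (x + y); rewrite hA le_eqVlt => /orP[/eqP b0|//].
  move: hb; rewrite -b0 expr0n /=; lra.
apply: (le_trans _ (ereal_sup_ubound _)); last first.
  exists (x, y) => //=; split; [exact: hx|split; [exact: hy|split]].
    by apply: neq_of_norm; rewrite hB.
  by apply: neqN_of_norm; rewrite hA.
rewrite /= hA hB lee_fin; apply: divr_ge0; first by move: hb; rewrite expr2; lra.
by rewrite !mulr_ge0 // ltW.
Qed.

Lemma SP_ge0_of_iso (x y : X) : `|x| = 1 -> `|y| = 1 ->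
  `|x + y| = `|x - y| -> (0 <= SP_const X)%E.
Proof.
move=> hx hy e.
set a := `|x + y|.
have a0 : 0 < a.
  rewrite /a lt_neqAle normr_ge0 andbT eq_sym; apply/negP => /eqP h.
  have h1 : x + y = 0 by apply/normr0_eq0.
  have h2 : x - y = 0 by apply/normr0_eq0; rewrite -e.
  have : x *+ 2 = 0.
    by rewrite -[RHS](addr0 0) -{1}h1 -h2 addrACA subrr addr0 mulr2n.
  move/eqP; rewrite -scaler_nat scaler_eq0 pnatr_eq0 /= => /eqP x0.
  by move: hx; rewrite x0 normr0 => /esym/eqP; rewrite oner_eq0.
have [ha|ha] := lerP 2 (a ^+ 2).
  by apply: (@SP_ge_val x y a hx hy erefl); rewrite -?e.
set u := a^-1 *: (x + y); set v := a^-1 *: (x - y).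
have hu : `|u| = 1 by rewrite /u normrZ ger0_norm ?invr_ge0 ?ltW // mulVf // gt_eqF.
have hv : `|v| = 1 by rewrite /v normrZ ger0_norm ?invr_ge0 ?ltW // -e mulVf // gt_eqF.
have huv : u + v = (2 / a) *: x.
  rewrite /u /v -scalerDr addrACA subrr addr0 -mulr2n -scaler_nat scalerA.
  by rewrite mulrC.
have huv' : u - v = (2 / a) *: y.
  rewrite /u /v -scalerBr opprB addrC addrA subrK -mulr2n -scaler_nat scalerA.
  by rewrite mulrC.
apply: (@SP_ge_val u v (2 / a) hu hv).
- by rewrite huv normrZ hx mulr1 ger0_norm // divr_ge0 // ltW.
- by rewrite huv' normrZ hy mulr1 ger0_norm // divr_ge0 // ltW.
- rewrite expr_div_n; have a20 : 0 < a ^+ 2 by rewrite exprn_gt0.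
  rewrite ler_pdivlMr //; lra.
Qed.

Lemma psi_cont (x z : X) : continuous (fun s : R =>
   `| `|z + s *: x| *: x + (z + s *: x)| - `| `|z + s *: x| *: x - (z + s *: x)|).
Proof.
have cw : continuous (fun s : R => z + s *: x).
  move=> s; apply: cvgD; first exact: cvg_cst.
  exact: (@continuousZr_tmp R X R id x s).
have hn : forall f : R -> X, continuous f -> continuous (fun s => `|f s|).
  by move=> f cf s; exact: (continuous_comp (cf s) (@norm_continuous _ _ _)).
have cn : continuous (fun s : R => `|z + s *: x|) := hn _ cw.
have cs : continuous (fun s : R => `|z + s *: x| *: x).
  by move=> s; exact: (@continuousZr_tmp R X R _ x s (cn s)).
move=> s; apply: cvgB.
- by apply: (hn (fun s => _ + _)) => t; apply: cvgD; [exact: cs|exact: cw].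
- by apply: (hn (fun s => _ - _)) => t; apply: cvgB; [exact: cs|exact: cw].
Qed.

Lemma psi_bounds (x z : X) (s : R) : `|x| = 1 ->
  let n := `|z + s *: x| in
  [/\ `|s| - `|z| <= n, n <= `|s| + `|z|,
      `|n + s| - `|z| <= `|n *: x + (z + s *: x)| <= `|n + s| + `|z| &
      `|n - s| - `|z| <= `|n *: x - (z + s *: x)| <= `|n - s| + `|z| ].
Proof.
move=> hx n.
have e1 : n *: x + (z + s *: x) = (n + s) *: x + z by rewrite scalerDl addrA addrAC.
have e2 : n *: x - (z + s *: x) = (n - s) *: x + - z.
  by rewrite scalerBl opprD addrA addrAC.
have hs : `|s *: x| = `|s| by rewrite normrZ hx mulr1.
split.
- by rewrite -hs /n (addrC z); exact: lerB_normD.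
- by rewrite -hs /n (addrC z); exact: ler_normD.
- rewrite e1; apply/andP; split.
    by have := lerB_normD ((n + s) *: x) z; rewrite normrZ hx mulr1.
  by have := ler_normD ((n + s) *: x) z; rewrite normrZ hx mulr1.
- rewrite e2; apply/andP; split.
    by have := lerB_normD ((n - s) *: x) (- z); rewrite normrZ hx mulr1 normrN.
  by have := ler_normD ((n - s) *: x) (- z); rewrite normrZ hx mulr1 normrN.
Qed.

Lemma exists_iso : dim_ge2 X ->
  exists x y : X, `|x| = 1 /\ `|y| = 1 /\ `|x + y| = `|x - y|.
Proof.
move=> [x0 [z hind]].
have x00 : `|x0| != 0.
  apply/negP => /eqP /normr0_eq0 h.
  have := hind 1 0; rewrite h scaler0 scale0r addr0 => /(_ erefl) [] /eqP.
  by rewrite oner_eq0.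
set x := `|x0|^-1 *: x0.
have hx : `|x| = 1 by rewrite /x normrZ normrV ?unitfE // normr_id mulVf.
have wn0 : forall s : R, z + s *: x != 0.
  move=> s; apply/negP => /eqP h.
  have := hind (s / `|x0|) 1; rewrite scale1r -scalerA -/x addrC h.
  by move=> /(_ erefl) [_] /eqP; rewrite oner_eq0.
pose psi := fun s : R =>
   `| `|z + s *: x| *: x + (z + s *: x)| - `| `|z + s *: x| *: x - (z + s *: x)|.
set t := 2 * `|z|.
have t0 : 0 <= t by rewrite /t mulr_ge0.
have p1 : 0 <= psi t.
  have [h1 h2 /andP[h3 _] /andP[_ h4]] := psi_bounds x z t hx.
  move: h1 h2 h3 h4; rewrite /psi /=.
  set n := `|z + t *: x|; rewrite (ger0_norm t0).
  have nt : 0 <= n + t by rewrite addr_ge0 // normr_ge0.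
  rewrite (ger0_norm nt).
  move=> h1 h2 h3 h4.
  have : `|n - t| <= `|z| by rewrite ler_norml; apply/andP; split; have ht : t = 2 * `|z| by []; lra.
  have ht : t = 2 * `|z| by []. lra.
have p2 : psi (- t) <= 0.
  have [h1 h2 /andP[_ h3] /andP[h4 _]] := psi_bounds x z (- t) hx.
  move: h1 h2 h3 h4; rewrite /psi /=.
  set n := `|z + (- t) *: x|; rewrite normrN (ger0_norm t0).
  have nt : 0 <= n - - t by rewrite opprK addr_ge0 // normr_ge0.
  rewrite (ger0_norm nt).
  move=> h1 h2 h3 h4.
  have : `|n + - t| <= `|z| by rewrite ler_norml; apply/andP; split; have ht : t = 2 * `|z| by []; lra.
  have ht : t = 2 * `|z| by []. lra.
have [c _ hc] : exists2 c, c \in `[- t, t] & psi c = 0.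
  apply: IVT.
  - lra.
  - exact/continuous_subspaceT/psi_cont.
  - by rewrite ge_min le_max p1 p2 orbT.
set w := z + c *: x; set n := `|w|.
have n0 : n != 0 by rewrite normr_eq0 wn0.
exists x, (n^-1 *: w); split; first exact: hx.
split; first by rewrite normrZ normrV ?unitfE // normr_id mulVf.
have ex : x = n^-1 *: (n *: x) by rewrite scalerA mulVf // scale1r.
rewrite {1 2}ex -scalerDr -scalerBr !normrZ.
by congr (_ * _); apply/eqP; rewrite -subr_eq0; apply/eqP; exact: hc.
Qed.
End S.

Theorem theorem4p1 (R : realType) (X : completeNormedModType R) :
  dim_ge2 X ->
  (((CNJ'_const X - 1%:E) * (2^-1)%:E) <= SP_const X)%E.
Proof.
move=> hd.
have [x [y [hx [hy he]]]] := @exists_iso R X hd.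
have S0 := @SP_ge0_of_iso R X _ _ hx hy he.
case hS: (SP_const X) => [s| |]; [|by rewrite leey|by move: S0; rewrite hS].
move: S0; rewrite hS lee_fin => s0.
have hC : (CNJ'_const X <= (2 * s + 1)%:E)%E.
  apply: ge_ereal_sup => _ [[p1 p2] /= [h1 h2] <-].
  rewrite lee_fin.
  set A := `|p1 + p2|; set B := `|p1 - p2|.
  have hA : A <= 2 by have := ler_normD p1 p2; rewrite h1 h2 -/A; lra.
  have hB : B <= 2 by have := ler_normD p1 (- p2); rewrite normrN h1 h2 -/B; lra.
  have A0 : 0 <= A := normr_ge0 _.
  have B0 : 0 <= B := normr_ge0 _.
  have [hN|hN] := lerP (A^+2 + B^+2) 4.
    rewrite ler_pdivrMr //; nra.
  have Ap : 0 < A by rewrite lt_neqAle A0 andbT; apply/eqP => e; rewrite -e in hN; nra.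
  have Bp : 0 < B by rewrite lt_neqAle B0 andbT; apply/eqP => e; rewrite -e in hN; nra.
  have hw : (A ^+ 2 + B ^+ 2 - 4) / (2 * A * B) <= s.
    rewrite -lee_fin -hS; apply: ereal_sup_ubound; exists (p1, p2) => //=.
    split; [exact: h1|split; [exact: h2|split]].
      by apply: neq_of_norm.
    by apply: neqN_of_norm.
  set w := (A ^+ 2 + B ^+ 2 - 4) / (2 * A * B) in hw.
  have ABp : 0 < 2 * A * B by rewrite !mulr_gt0.
  have wd : w * (2 * A * B) = A ^+ 2 + B ^+ 2 - 4 by rewrite /w divfK // gt_eqF.
  have wp : 0 < w by rewrite /w divr_gt0 // subr_gt0.
  have hAB : A * B <= 4 by nra.
  rewrite ler_pdivrMr //; nra.
case hC': (CNJ'_const X) hC => [c| |] hC.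
- rewrite -EFinB -EFinM lee_fin; move: hC; rewrite lee_fin => hC.
  rewrite ler_pdivrMr //; lra.
- by [].
- have -> : (-oo - 1 = -oo :> \bar R)%E by [].
  by rewrite mulNyr gtr0_sg ?invr_gt0 // mul1e leNye.
Qed.
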